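(* Let $(A,* )$ be an involutive associative algebra, $(M,* )$ an involutive $A$-bimodule, and $T:M\to A$ a relative Rota-Baxter operator on $A$ with respect to $M$. Then the maps $l_T:M\otimes A\to A$, $l_T(u,a)=T(u)a-T(ua)$, and $r_T:A\otimes M\to A$, $r_T(a,u)=aT(u)-T(au)$, define (as left and right actions respectively) an involutive bimodule structure on $(A,* )$ over the involutive associative algebra $(M,\circledast,* )$, where $u\circledast v=uT(v)+T(u)v$.
   Context: An involutive associative algebra is an associative algebra $A$ with a linear map $*:A\to A$ satisfying $a^{**}=a$ and $(ab)^*=b^*a^*$. An involutive $A$-bimodule is an $A$-bimodule $M$ with a linear map $*:M\to M$ such that $u^{**}=u$, $(au)^*=u^*a^*$, $(ua)^*=a^*u^*$. A relative Rota-Baxter operator on $A$ with respect to $M$ is a linear map $T:M\to A$ with $T(u^* )=T(u)^*$ and $T(u)T(v)=T(uT(v)+T(u)v)$ for $u,v\in M$; in this situation $(M,\circledast,* )$ is an involutive associative algebra. An involutive bimodule over an involutive algebra $(N,* )$ is an $N$-bimodule $P$ with an involution satisfying $(xp)^*=p^*x^*$, $(px)^*=x^*p^*$ for $x\in N$, $p\in P$. *)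

(* Defs.v *)
From HB Require Import structures.
From mathcomp Require Import all_boot all_algebra.
Set Implicit Arguments. Unset Strict Implicit. Unset Printing Implicit Defensive.
Import GRing.Theory.
Local Open Scope ring_scope.

(* All structures are vector spaces over a field K; multiplications and
   actions are given as explicit maps (algebras are not assumed unital). *)
Section Defs.
Variable K : fieldType.

Definition is_linear (U V : lmodType K) (f : U -> V) : Prop :=
  forall (k : K) (x y : U), f (k *: x + y) = k *: f x + f y.

Definition is_bilinear (U V W : lmodType K) (f : U -> V -> W) : Prop :=
  (forall y : V, is_linear (fun x => f x y)) /\ (forall x : U, is_linear (f x)).

Definition assoc_algebra (A : lmodType K) (mul : A -> A -> A) : Prop :=
  is_bilinear mul /\ (forall a b c, mul a (mul b c) = mul (mul a b) c).

Definition involutive_algebra (A : lmodType K) (mul : A -> A -> A)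
  (star : A -> A) : Prop :=
  [/\ assoc_algebra mul, is_linear star, (forall a, star (star a) = a)
    & (forall a b, star (mul a b) = mul (star b) (star a))].

Definition bimodule (N : lmodType K) (mul : N -> N -> N) (M : lmodType K)
  (lact : N -> M -> M) (ract : M -> N -> M) : Prop :=
  [/\ is_bilinear lact, is_bilinear ract,
      (forall a b u, lact (mul a b) u = lact a (lact b u)),
      (forall a b u, ract u (mul a b) = ract (ract u a) b)
    & (forall a b u, ract (lact a u) b = lact a (ract u b))].

Definition involutive_bimodule (N : lmodType K) (mul : N -> N -> N)
  (starN : N -> N) (M : lmodType K) (lact : N -> M -> M) (ract : M -> N -> M)
  (starM : M -> M) : Prop :=
  [/\ bimodule mul lact ract, is_linear starM, (forall u, starM (starM u) = u),
      (forall a u, starM (lact a u) = ract (starM u) (starN a))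
    & (forall a u, starM (ract u a) = lact (starN a) (starM u))].

Definition relative_RB (A : lmodType K) (mul : A -> A -> A) (starA : A -> A)
  (M : lmodType K) (lact : A -> M -> M) (ract : M -> A -> M) (starM : M -> M)
  (T : M -> A) : Prop :=
  [/\ is_linear T, (forall u, T (starM u) = starA (T u))
    & (forall u v, mul (T u) (T v) = T (ract u (T v) + lact (T u) v))].

Definition RB_mul (A M : lmodType K) (lact : A -> M -> M) (ract : M -> A -> M)
  (T : M -> A) (u v : M) : M := ract u (T v) + lact (T u) v.

Definition lT (A M : lmodType K) (mul : A -> A -> A) (ract : M -> A -> M)
  (T : M -> A) (u : M) (a : A) : A := mul (T u) a - T (ract u a).

Definition rT (A M : lmodType K) (mul : A -> A -> A) (lact : A -> M -> M)
  (T : M -> A) (a : A) (u : M) : A := mul a (T u) - T (lact a u).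

End Defs.

(* Main.v *)
Require Import Defs.
From mathcomp Require Import all_boot all_algebra.
Import GRing.Theory.
Local Open Scope ring_scope.

Section H.
Variable K : fieldType.
Variables U V W : lmodType K.

Lemma lin0 (f : U -> V) : is_linear f -> f 0 = 0.
Proof. move=> h; have := h 1 0 0; rewrite !scale1r addr0 => e.
by apply: (@addrI _ (f 0)); rewrite addr0 -e. Qed.

Lemma linD (f : U -> V) : is_linear f -> forall x y, f (x + y) = f x + f y.
Proof. by move=> h x y; have := h 1 x y; rewrite !scale1r. Qed.

Lemma linZ (f : U -> V) : is_linear f -> forall k x, f (k *: x) = k *: f x.
Proof. by move=> h k x; have := h k x 0; rewrite !addr0 lin0 // addr0. Qed.

Lemma linN (f : U -> V) : is_linear f -> forall x, f (- x) = - f x.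
Proof. by move=> h x; rewrite -scaleN1r linZ // scaleN1r. Qed.

Lemma linB (f : U -> V) : is_linear f -> forall x y, f (x - y) = f x - f y.
Proof. by move=> h x y; rewrite linD // linN. Qed.

Lemma lin_sub (f g : U -> V) : is_linear f -> is_linear g ->
  is_linear (fun x => f x - g x).
Proof. move=> hf hg k x y; rewrite hf hg scalerBr.
rewrite opprD !addrA; congr (_ + _); rewrite addrAC. done. Qed.

Lemma lin_comp (f : U -> V) (g : V -> W) : is_linear f -> is_linear g ->
  is_linear (fun x => g (f x)).
Proof. by move=> hf hg k x y; rewrite hf hg. Qed.
End H.
Arguments lin0 {K U V f}. Arguments linD {K U V f}. Arguments linB {K U V f}. Arguments linZ {K U V f}. Arguments linN {K U V f}.

Lemma zz (V : zmodType) (X P Q R : V) : X - (P+Q) - (R - Q) = X - P - R.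
Proof. by rewrite opprB opprD !addrA subrK. Qed.
Lemma z1 (V : zmodType) (X P Q R : V) : X - (P+Q) = X - (R+Q) - (P - R).
Proof. by rewrite (addrC R Q) zz opprD addrA addrAC. Qed.
Lemma z2 (V : zmodType) (X P Q R : V) : X - (P+Q) = X - (P+R) - (Q - R).
Proof. by rewrite zz opprD addrA. Qed.
Lemma z3 (V : zmodType) (X A B C D : V) :
  X - (A+B) - (C - B) = X - (D+C) - (A - D).
Proof. by rewrite zz (addrC D C) zz addrAC. Qed.

Theorem mainTheorem4 (K : fieldType) (A M : lmodType K)
  (mulA : A -> A -> A) (starA : A -> A)
  (lact : A -> M -> M) (ract : M -> A -> M) (starM : M -> M) (T : M -> A) :
  involutive_algebra mulA starA ->
  involutive_bimodule mulA starA lact ract starM ->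
  relative_RB mulA starA lact ract starM T ->
  involutive_bimodule (RB_mul lact ract T) starM
    (lT mulA ract T) (rT mulA lact T) starA.
Proof.
move=> [[[mul1 mul2] massoc] sAlin sAK sAmul].
move=> [[[l1 l2] [r1 r2] lassoc rassoc mid] sMlin sMK sMl sMr].
move=> [Tlin Tstar RB].
have bl : is_bilinear (lT mulA ract T).
  split=> [a|u]; apply: lin_sub => k x y /=.
  - by rewrite Tlin mul1.
  - by rewrite r1 Tlin.
  - by rewrite mul2.
  - by rewrite r2 Tlin.
have br : is_bilinear (rT mulA lact T).
  split=> [u|a]; apply: lin_sub => k x y /=.
  - by rewrite mul1.
  - by rewrite l1 Tlin.
  - by rewrite Tlin mul2.
  - by rewrite l2 Tlin.
have TD := linD Tlin. have TB := linB Tlin.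
have m1D y := linD (mul1 y). have m1B y := linB (mul1 y).
have m2D y := linD (mul2 y). have m2B y := linB (mul2 y).
have r1D y := linD (r1 y). have r1B y := linB (r1 y).
have r2D y := linD (r2 y). have r2B y := linB (r2 y).
have l1D y := linD (l1 y). have l1B y := linB (l1 y).
have l2D y := linD (l2 y). have l2B y := linB (l2 y).
have sAB := linB sAlin.
split=> //; first split=> //.
- move=> u v a; rewrite /lT /RB_mul.
  rewrite -(RB u v) m2B r2B !TB r1D TD rassoc mid (RB u (ract v a)) massoc !TD.
  exact: z1.
- move=> u v a; rewrite /rT /RB_mul.
  rewrite -(RB u v) massoc m1B l1B !TB l2D TD -lassoc -mid (RB (lact a u) v) !TD.
  exact: z2.
- move=> u v a; rewrite /rT /lT.
  rewrite m1B m2B l1B r2B !TB massoc (RB (ract u a) v) (RB u (lact a v)) !TD rassoc lassoc.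
  exact: z3.
- move=> u a; rewrite /lT /rT sAB sAmul -!Tstar sMr.
  by [].
- move=> u a; rewrite /lT /rT sAB sAmul -!Tstar sMl.
  by [].
Qed.
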